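(* Under the standing assumptions in the context, there exist a neighborhood $\mathcal U$ of $(0,\bar X)$ and $C>0$ such that for every $(t,X)\in\mathcal U\cap\{t>0\}$, \[ |\partial_t\lambda_1|\le C a,\qquad |\partial_t\lambda_2|\le C,\qquad |\partial_t\lambda_3|\le C . \]
   Context: Let $W\subset\mathbb R^l$ be open, $\bar X\in W$, $c,T>0$, and let $a(t,X),b(t,X)$ be real-valued $C^\infty$ functions on $(-c,T)\times W$ with bounded derivatives of all orders. Assume $\Delta(t,X):=4a(t,X)^3-27b(t,X)^2\ge 0$ on $[0,T)\times W$, $a(0,\bar X)=0$, and $a(t,X)>0$ on $(0,T)\times W$. Let $S(t,X)=\begin{bmatrix}3&0&-a\\0&2a&3b\\-a&3b&a^2\end{bmatrix}$ and let $0\le\lambda_1\le\lambda_2\le\lambda_3$ be its eigenvalues (smooth on $\mathcal U\cap\{t>0\}$ for a small neighborhood $\mathcal U$ of $(0,\bar X)$). *)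

(* Defs.v *)
From HB Require Import structures.
From mathcomp Require Import all_boot all_order all_algebra.
From mathcomp Require Import all_classical all_reals all_analysis.
Set Implicit Arguments. Unset Strict Implicit. Unset Printing Implicit Defensive.
Import Order.TTheory GRing.Theory Num.Theory.
Import numFieldNormedType.Exports.
Local Open Scope classical_set_scope.
Local Open Scope ring_scope.

Section Defs.
Variables (R : realType) (l : nat).

(* A direction of partial differentiation: None = d/dt, Some j = d/dX_j. *)
Definition pderiv (F : R -> 'rV[R]_l -> R) (d : option 'I_l) : R -> 'rV[R]_l -> R :=
  match d with
  | None => fun t X => 'D_1 (fun s : R => F s X) t
  | Some j => fun t X => 'D_(delta_mx 0 j) (F t) X
  end.

Definition pderivable (F : R -> 'rV[R]_l -> R) (d : option 'I_l) (t : R) (X : 'rV[R]_l) : Prop :=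
  match d with
  | None => derivable (fun s : R => F s X) t 1
  | Some j => derivable (F t) X (delta_mx 0 j)
  end.

Definition iter_pderiv (ds : seq (option 'I_l)) (F : R -> 'rV[R]_l -> R) :=
  foldr (fun d G => pderiv G d) F ds.

(* F is C^infty on (-c,T) x W with bounded derivatives of all orders:
   all iterated partial derivatives exist on the domain, and those of
   order >= 1 are bounded there. *)
Definition smooth_bdd_derivs (c T : R) (W : set 'rV[R]_l) (F : R -> 'rV[R]_l -> R) : Prop :=
  (forall (ds : seq (option 'I_l)) (d : option 'I_l) (t : R) (X : 'rV[R]_l),
      - c < t < T -> W X -> pderivable (iter_pderiv ds F) d t X) /\
  (forall ds : seq (option 'I_l), ds != [::] ->
      exists M : R, forall (t : R) (X : 'rV[R]_l),
        - c < t < T -> W X -> `|iter_pderiv ds F t X| <= M).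

End Defs.

Definition Smat (R : realType) (a b : R) : 'M[R]_3 :=
  \matrix_(i < 3, j < 3)
    nth 0 (nth [::] [:: [:: 3; 0; - a]; [:: 0; 2 * a; 3 * b]; [:: - a; 3 * b; a ^+ 2]] i) j.

Definition sorted_eigenvalues (R : realType) (A : 'M[R]_3) (l1 l2 l3 : R) : Prop :=
  l1 <= l2 <= l3 /\
  char_poly A = ('X - l1%:P) * ('X - l2%:P) * ('X - l3%:P).

(* Main.v *)
Require Import Defs.
From HB Require Import structures.
From mathcomp Require Import all_boot all_order all_algebra.
From mathcomp Require Import all_classical all_reals all_analysis.
From mathcomp Require Import ring lra.
Import Order.TTheory GRing.Theory Num.Theory.
Import numFieldNormedType.Exports.
Local Open Scope classical_set_scope.
Local Open Scope ring_scope.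
Set Implicit Arguments. Unset Strict Implicit. Unset Printing Implicit Defensive.

Definition Epol (R : realType) (a b x : R) : R :=
  x ^+ 3 - (3 + 2 * a + a ^+ 2) * x ^+ 2 + (6 * a + 2 * a ^+ 2 + 2 * a ^+ 3 - 9 * b ^+ 2) * x
  - (4 * a ^+ 3 - 27 * b ^+ 2).

Lemma char_Smat (R : realType) (a b x : R) : (char_poly (Smat a b)).[x] = Epol a b x.
Proof.
rewrite /char_poly -[_.[x]]/(horner_eval x _) -det_map_mx.
rewrite (expand_det_row _ 0) !big_ord_recr big_ord0 /= /cofactor.
rewrite !(expand_det_row _ 0) !big_ord_recr big_ord0 /= /cofactor.
rewrite !det_mx11 !mxE /= !big_ord0 /horner_eval !hornerE /Epol.
rewrite ?expr0 ?expr1 /=.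
ring.
Qed.
Section Alg.
Variable R : realType.
Implicit Types a b x : R.

Lemma signpos (l1 l2 l3 x : R) : l1 <= l2 -> l2 <= l3 ->
  0 < (x - l1) * (x - l2) * (x - l3) -> l3 < x \/ (l1 < x /\ x < l2).
Proof.
move=> h12 h23 hp.
case: (ltrP l3 x) => [|h3]; first by left.
right; case: (ltrP l1 x) => h1; last first.
  exfalso; have: (x - l1) * (x - l2) * (x - l3) <= 0.
    apply: mulr_ge0_le0; last lra.
    apply: mulr_le0; lra.
  by rewrite leNgt hp.
case: (ltrP x l2) => h2; first by [].
exfalso; have: (x - l1) * (x - l2) * (x - l3) <= 0.
  apply: mulr_ge0_le0; last lra.
  apply: mulr_ge0; lra.
by rewrite leNgt hp.
Qed.

Lemma signneg (l1 l2 l3 x : R) : l1 <= l2 -> l2 <= l3 ->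
  (x - l1) * (x - l2) * (x - l3) < 0 -> x < l1 \/ (l2 < x /\ x < l3).
Proof.
move=> h12 h23 hp.
case: (ltrP x l1) => [|h1]; first by left.
right; case: (ltrP l2 x) => h2; last first.
  exfalso; have: 0 <= (x - l1) * (x - l2) * (x - l3).
    apply: mulr_le0; last lra.
    apply: mulr_ge0_le0; lra.
  by rewrite leNgt hp.
case: (ltrP x l3) => h3; first by [].
exfalso; have: 0 <= (x - l1) * (x - l2) * (x - l3).
  apply: mulr_ge0; last lra.
  apply: mulr_ge0; lra.
by rewrite leNgt hp.
Qed.

Lemma loc (a b l1 l2 l3 : R) : 0 < a -> a <= 1/100 -> 0 <= 4 * a ^+ 3 - 27 * b ^+ 2 ->
  l1 <= l2 -> l2 <= l3 ->
  (forall x, (x - l1) * (x - l2) * (x - l3) = Epol a b x) ->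
  [/\ 0 <= l1, l1 <= 4 * a ^+ 2, a / 2 < l2, l2 < 3 * a & 2 < l3 /\ l3 < 4].
Proof.
move=> a0 a1 D h12 h23 E.
set B := b ^+ 2.
have B0 : 0 <= B by rewrite /B sqr_ge0.
have BA : 27 * B <= 4 * a ^+ 3 by rewrite /B; lra.
have p1 : 0 < Epol a b (a / 2).
  rewrite /Epol -/B.
  have -> : (a / 2) ^+ 3 - (3 + 2 * a + a ^+ 2) * (a / 2) ^+ 2 +
   (6 * a + 2 * a ^+ 2 + 2 * a ^+ 3 - 9 * B) * (a / 2) - (4 * a ^+ 3 - 27 * B)
   = a ^+ 2 * (9/4 - 27/8 * a + 3/4 * a ^+ 2) + B * (27 - 9/2 * a) by field.
  have h1 : 0 < 9/4 - 27/8 * a + 3/4 * a ^+ 2 by nra.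
  have h2 : 0 <= B * (27 - 9/2 * a) by apply: mulr_ge0 => //; lra.
  have h3 : 0 < a ^+ 2 by rewrite exprn_gt0.
  have := mulr_gt0 h3 h1; lra.
have p2 : Epol a b (3 * a) < 0.
  rewrite /Epol -/B.
  have -> : (3 * a) ^+ 3 - (3 + 2 * a + a ^+ 2) * (3 * a) ^+ 2 +
   (6 * a + 2 * a ^+ 2 + 2 * a ^+ 3 - 9 * B) * (3 * a) - (4 * a ^+ 3 - 27 * B)
   = - 9 * a ^+ 2 + 11 * a ^+ 3 - 3 * a ^+ 4 + 27 * B * (1 - a) by ring.
  have h3 : 0 < a ^+ 2 by rewrite exprn_gt0.
  have : 27 * B * (1 - a) <= 4 * a ^+ 3 by nra.
  have : a ^+ 3 <= a ^+ 2 / 100 by rewrite exprS; nra.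
  have : 0 <= a ^+ 4 by rewrite exprn_ge0 // ltW.
  lra.
have p3 : Epol a b 2 < 0.
  rewrite /Epol -/B.
  have -> : 2 ^+ 3 - (3 + 2 * a + a ^+ 2) * 2 ^+ 2 +
   (6 * a + 2 * a ^+ 2 + 2 * a ^+ 3 - 9 * B) * 2 - (4 * a ^+ 3 - 27 * B)
   = - 4 + 4 * a + 9 * B by ring.
  have : a ^+ 3 <= 1 by rewrite exprS; nra.
  lra.
have p4 : 0 < Epol a b 4.
  rewrite /Epol -/B.
  have -> : 4 ^+ 3 - (3 + 2 * a + a ^+ 2) * 4 ^+ 2 +
   (6 * a + 2 * a ^+ 2 + 2 * a ^+ 3 - 9 * B) * 4 - (4 * a ^+ 3 - 27 * B)
   = 16 - 8 * a - 8 * a ^+ 2 + 4 * a ^+ 3 - 9 * B by ring.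
  have : a ^+ 3 <= 1 by rewrite exprS; nra.
  have : a ^+ 2 <= 1 by nra.
  have : 0 <= a ^+ 3 by rewrite exprn_ge0 // ltW.
  lra.
rewrite -E in p1; rewrite -E in p2; rewrite -E in p3; rewrite -E in p4.
have s1 := signpos h12 h23 p1.
have s2 := signneg h12 h23 p2.
have s3 := signneg h12 h23 p3.
have s4 := signpos h12 h23 p4.
have hl1 : l1 < a / 2 /\ a / 2 < l2.
  case: s1 => // h; exfalso; case: s2; lra.
have hl2 : l2 < 3 * a /\ 3 * a < l3 by case: s2; lra.
have hl3 : 2 < l3 by case: s3; lra.
have hl4 : l3 < 4 by case: s4; lra.
have E0 := E 0.
rewrite /Epol in E0.
have P : l1 * (l2 * l3) = 4 * a ^+ 3 - 27 * b ^+ 2.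
  have : (0 - l1) * (0 - l2) * (0 - l3) = - (l1 * (l2 * l3)) by ring.
  move: E0; rewrite !expr0n /= => E0; lra.
have l23 : 0 < l2 * l3 by apply: mulr_gt0; lra.
have l1p : 0 <= l1.
  rewrite -(pmulr_lge0 _ l23) P; lra.
have l23b : a < l2 * l3.
  have : l2 * 2 < l2 * l3 by rewrite ltr_pM2l //; lra.
  lra.
split => //; try lra.
have h1 : l1 * a <= l1 * (l2 * l3) by apply: ler_wpM2l => //; lra.
have h2 : 4 * a ^+ 3 = (4 * a ^+ 2) * a by ring.
have h3 := sqr_ge0 b.
rewrite -(ler_pM2r a0); move: h1 h2 h3 P; clear; lra.
Qed.
End Alg.


Section An.
Variable R : realType.

Lemma quotE (f : R -> R) (t : R) :
  (fun h : R => h^-1 *: ((f \o shift t) (h *: 1) - f t)) =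
  (fun h => h^-1 * (f (h + t) - f t)).
Proof. by apply/funext => h /=; rewrite /GRing.scale /= mulr1. Qed.

Lemma quot_to_derive (f : R -> R) (t L : R) :
  (fun h => h^-1 * (f (h + t) - f t)) @ 0^' --> L -> derivable f t 1 /\ 'D_1 f t = L.
Proof.
move=> H; split; first by rewrite /derivable quotE; apply/cvg_ex; exists L.
by rewrite /derive quotE; apply: cvg_lim.
Qed.

Lemma derive_to_quot (f : R -> R) (t : R) :
  derivable f t 1 -> (fun h => h^-1 * (f (h + t) - f t)) @ 0^' --> 'D_1 f t.
Proof. by rewrite /derivable /derive quotE. Qed.

Lemma cont_from_deriv (f : R -> R) (t : R) :
  derivable f t 1 -> (fun h => f (h + t)) @ 0^' --> f t.
Proof.
move=> /derive_to_quot H.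
have H2 : (fun h => f t + h * (h^-1 * (f (h + t) - f t))) @ 0^' --> f t + 0 * 'D_1 f t.
  apply: cvgD; first exact: cvg_cst.
  apply: cvgM => //; exact: cvg_within.
rewrite mul0r addr0 in H2.
apply: cvg_trans H2; apply: near_eq_cvg; near=> h.
have hn : h != 0 by near: h; exact: nbhs_dnbhs_neq.
by rewrite mulrA mulfV // mul1r addrC subrK.
Unshelve. all: by end_near.
Qed.

Lemma lipD (f : R -> R) (x y M : R) : x <= y ->
  (forall z, x <= z <= y -> derivable f z 1 /\ `|'D_1 f z| <= M) ->
  `|f y - f x| <= M * (y - x).
Proof.
move=> xy H.
have [c cI ->] : exists2 c, c \in `[x, y]%R & f y - f x = 'D_1 f c * (y - x).
  apply: MVT_segment => //.
    move=> z; rewrite in_itv /= => /andP[h1 h2]; apply: derivableP.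
    by apply: (proj1 (H z _)); rewrite !ltW.
  apply: derivable_within_continuous => z; rewrite in_itv /= => /andP[h1 h2].
  by apply: (proj1 (H z _)); rewrite h1 h2.
rewrite normrM (ger0_norm (_ : 0 <= y - x)); last by rewrite subr_ge0.
apply: ler_wpM2r; first by rewrite subr_ge0.
by apply: (proj2 (H c _)); move: cI; rewrite in_itv.
Qed.

Lemma taylor2 (f : R -> R) (t h M : R) : 0 <= h ->
  (forall z, t <= z <= t + h -> derivable f z 1 /\ derivable ('D_1 f) z 1 /\
     `|'D_1 ('D_1 f) z| <= M) ->
  `|f (t + h) - f t - 'D_1 f t * h| <= M * h ^+ 2.
Proof.
move=> h0 H.
have th : t <= t + h by rewrite lerDl.
have [c cI E] : exists2 c, c \in `[t, t + h]%R & f (t + h) - f t = 'D_1 f c * (t + h - t).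
  apply: MVT_segment => //.
    move=> z; rewrite in_itv /= => /andP[h1 h2]; apply: derivableP.
    by apply: (proj1 (H z _)); rewrite !ltW.
  apply: derivable_within_continuous => z; rewrite in_itv /= => /andP[h1 h2].
  by apply: (proj1 (H z _)); rewrite h1 h2.
move: cI; rewrite in_itv /= => /andP[c1 c2].
have L : `|'D_1 f c - 'D_1 f t| <= M * (c - t).
  apply: (@lipD ('D_1 f) t c M c1) => z /andP[z1 z2]; split.
    by apply: (proj1 (proj2 (H z _))); rewrite z1 (le_trans z2 c2).
  by apply: (proj2 (proj2 (H z _))); rewrite z1 (le_trans z2 c2).
have M0 : 0 <= M.
  apply: le_trans (proj2 (proj2 (H t _))); first exact: normr_ge0.
  by rewrite lexx th.
have E2 : f (t + h) - f t - 'D_1 f t * h = ('D_1 f c - 'D_1 f t) * h.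
  rewrite E (_ : t + h - t = h) ?mulrBl //; by rewrite addrAC subrr add0r.
rewrite E2 normrM (ger0_norm h0).
apply: le_trans (ler_wpM2r h0 L) _.
rewrite expr2 mulrA; apply: ler_wpM2r => //; apply: ler_wpM2l => //.
by rewrite lerBlDl.
Qed.

End An.


Section Lines.
Variables (R : realType) (l : nat).

Lemma line_derive (f : 'rV[R]_l -> R) (Y v : 'rV[R]_l) (u : R) :
  derivable f (Y + u *: v) v ->
  derivable (fun s : R => f (Y + s *: v)) u 1 /\
  'D_1 (fun s : R => f (Y + s *: v)) u = 'D_v f (Y + u *: v).
Proof.
have E : (fun h : R => h^-1 *: (((fun s : R => f (Y + s *: v)) \o shift u) (h *: 1)
            - (fun s : R => f (Y + s *: v)) u)) =
         (fun h : R => h^-1 *: ((f \o shift (Y + u *: v)) (h *: v) - f (Y + u *: v))).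
  apply/funext => h /=; congr (_ *: (f _ - _)).
  have e1 : h *: (1 : R) = h := mulr1 h.
  by rewrite e1 scalerDl addrCA.
by move=> H; split; [rewrite /derivable E | rewrite /derive E].
Qed.

Lemma lip_line (f : 'rV[R]_l -> R) (Y v : 'rV[R]_l) (d M : R) :
  (forall u : R, `|u| <= `|d| -> derivable f (Y + u *: v) v /\
                  `|'D_v f (Y + u *: v)| <= M) ->
  `|f (Y + d *: v) - f Y| <= M * `|d|.
Proof.
move=> H.
pose g := fun s : R => f (Y + s *: v).
have Hg : forall z, `|z| <= `|d| -> derivable g z 1 /\ `|'D_1 g z| <= M.
  move=> z hz; have [h1 h2] := H z hz.
  have [h3 h4] := line_derive h1.
  by split => //; rewrite /g h4.
have g0 : g 0 = f Y by rewrite /g scale0r addr0.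
case: (lerP 0 d) => hd.
  have := @lipD R g 0 d M hd.
  rewrite g0 subr0 (ger0_norm hd); apply => z /andP[z1 z2]; apply: Hg.
  by rewrite (ger0_norm z1) (ger0_norm hd).
have hd' : d <= 0 by rewrite ltW.
have := @lipD R g d 0 M hd'.
rewrite g0 distrC sub0r -(ler0_norm hd'); apply => z /andP[z1 z2]; apply: Hg.
by rewrite (ler0_norm z2) (ler0_norm hd') lerN2.
Qed.

Definition pathY (X0 X : 'rV[R]_l) (k : nat) : 'rV[R]_l :=
  \row_j (if (j < k)%N then X 0 j else X0 0 j).

Lemma path_bound (f : 'rV[R]_l -> R) (X0 X : 'rV[R]_l) (r M : R) :
  0 <= M -> 0 <= r ->
  (forall i, `|X 0 i - X0 0 i| <= r) ->
  (forall (j : 'I_l) (Z : 'rV[R]_l), (forall i, `|Z 0 i - X0 0 i| <= r) ->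
     derivable f Z (delta_mx 0 j) /\ `|'D_(delta_mx 0 j) f Z| <= M) ->
  `|f X - f X0| <= l%:R * (M * r).
Proof.
move=> M0 r0 HX H.
have Y0 : pathY X0 X 0 = X0 by apply/rowP => j; rewrite mxE.
have Yl : pathY X0 X l = X by apply/rowP => j; rewrite mxE ltn_ord.
have Yin : forall k i, `|pathY X0 X k 0 i - X0 0 i| <= r.
  move=> k i; rewrite mxE; case: ifP => _ //; by rewrite subrr normr0.
suff : forall k, `|f (pathY X0 X k) - f X0| <= k%:R * (M * r) by move=> /(_ l); rewrite Yl.
elim => [|k IH]; first by rewrite Y0 subrr normr0 mul0r.
case: (ltnP k l) => kl; last first.
  have -> : pathY X0 X k.+1 = pathY X0 X k.
    apply/rowP => j; rewrite !mxE.
    have jk : (j < k)%N by apply: leq_trans (ltn_ord j) kl.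
    by rewrite ltnS (ltnW jk) jk.
  apply: le_trans IH _; apply: ler_wpM2r; first exact: mulr_ge0.
  by rewrite ler_nat.
pose j0 := Ordinal kl.
set d := X 0 j0 - X0 0 j0.
have step : pathY X0 X k.+1 = pathY X0 X k + d *: delta_mx 0 j0.
  apply/rowP => j; rewrite !mxE /=.
  case: (eqVneq j j0) => [->|jn] /=.
    by rewrite ltnn ltnSn mulr1 /d addrC subrK.
  rewrite mulr0 addr0 ltnS leq_eqVlt.
  have -> : (nat_of_ord j == k) = false.
    by apply/negbTE; apply: contra jn => /eqP e; apply/eqP/val_inj.
  by [].
have hstep : `|f (pathY X0 X k.+1) - f (pathY X0 X k)| <= M * `|d|.
  rewrite step; apply: lip_line => u hu; apply: H => i.
  rewrite !mxE /=; case: (eqVneq i j0) => [->|jn] /=.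
    rewrite ltnn mulr1 addrAC subrr add0r; apply: le_trans hu _; apply: HX.
  rewrite mulr0 addr0.
  by move: (Yin k i); rewrite /pathY !mxE.
have hd : `|d| <= r by apply: HX.
rewrite -(subrK (f (pathY X0 X k)) (f (pathY X0 X k.+1))) -addrA.
apply: le_trans (ler_normD _ _) _.
rewrite -nat1r mulrDl mul1r; apply: lerD => //.
apply: le_trans hstep _; exact: ler_wpM2l.
Qed.

Lemma ball_rV (X0 X : 'rV[R]_l) (r : R) : ball X0 r X -> forall i, `|X 0 i - X0 0 i| < r.
Proof.
move=> [_ H] i; have := H 0 i; rewrite /ball /= distrC //.
Qed.

Lemma rV_ball (X0 X : 'rV[R]_l) (r : R) : 0 < r -> (forall i, `|X 0 i - X0 0 i| < r) -> ball X0 r X.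
Proof.
move=> r0 H; split => // i j; rewrite /ball /= distrC.
by rewrite (ord1 i); apply: H.
Qed.

End Lines.


Definition dEpol (R : realType) (a b a' b' x : R) : R :=
  - (2 * a' + 2 * a * a') * x ^+ 2 + (6 * a' + 4 * a * a' + 6 * a ^+ 2 * a' - 18 * (b * b')) * x
  - (12 * a ^+ 2 * a' - 54 * (b * b')).

Ltac cvg_tac := repeat first [ apply: cvg_cst | eassumption | apply: cvgD | apply: cvgB
  | apply: cvgM | apply: cvgN ].

Section Lim.
Variable R : realType.

Lemma Epol_cvg (A B : R -> R) (t x : R) :
  (fun h => A (h + t)) @ 0^' --> A t -> (fun h => B (h + t)) @ 0^' --> B t ->
  (fun h => Epol (A (h + t)) (B (h + t)) x) @ 0^' --> Epol (A t) (B t) x.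
Proof.
move=> HA HB.
have E : forall a b : R, Epol a b x =
  x * x * x - (3 + 2 * a + a * a) * (x * x) + (6 * a + 2 * (a * a) + 2 * (a * a * a)
   - 9 * (b * b)) * x - (4 * (a * a * a) - 27 * (b * b)).
  by move=> a b; rewrite /Epol; ring.
have -> : (fun h => Epol (A (h + t)) (B (h + t)) x) = (fun h =>
  x * x * x - (3 + 2 * A (h + t) + A (h + t) * A (h + t)) * (x * x) +
  (6 * A (h + t) + 2 * (A (h + t) * A (h + t)) + 2 * (A (h + t) * A (h + t) * A (h + t))
   - 9 * (B (h + t) * B (h + t))) * x - (4 * (A (h + t) * A (h + t) * A (h + t))
   - 27 * (B (h + t) * B (h + t)))).
  by apply/funext => h; rewrite E.
rewrite E.
cvg_tac.
Qed.

Lemma Epol_quot (A B : R -> R) (t x A' B' : R) :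
  (fun h => A (h + t)) @ 0^' --> A t -> (fun h => B (h + t)) @ 0^' --> B t ->
  (fun h => h^-1 * (A (h + t) - A t)) @ 0^' --> A' ->
  (fun h => h^-1 * (B (h + t) - B t)) @ 0^' --> B' ->
  (fun h => h^-1 * (Epol (A (h + t)) (B (h + t)) x - Epol (A t) (B t) x)) @ 0^'
    --> dEpol (A t) (B t) A' B' x.
Proof.
move=> HA HB HqA HqB.
pose G (A1 B1 A0 B0 qA qB : R) :=
  - (2 * qA + (A1 + A0) * qA) * (x * x) + (6 * qA + 2 * ((A1 + A0) * qA)
  + 2 * ((A1 * A1 + A1 * A0 + A0 * A0) * qA) - 9 * ((B1 + B0) * qB)) * x
  - (4 * ((A1 * A1 + A1 * A0 + A0 * A0) * qA) - 27 * ((B1 + B0) * qB)).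
have -> : (fun h => h^-1 * (Epol (A (h + t)) (B (h + t)) x - Epol (A t) (B t) x)) =
  (fun h => G (A (h + t)) (B (h + t)) (A t) (B t) (h^-1 * (A (h + t) - A t))
               (h^-1 * (B (h + t) - B t))).
  by apply/funext => h; rewrite /G /Epol; ring.
have -> : dEpol (A t) (B t) A' B' x = G (A t) (B t) (A t) (B t) A' B'.
  by rewrite /G /dEpol; ring.
rewrite /G.
cvg_tac.
Qed.

End Lim.


Definition Kc (R : realType) (M1 M2 : R) : R := 1 + 3 * ((1 + M1) ^+ 3 + 1 + M2 ^+ 2).

Section Bnd.
Variable R : realType.

Lemma cvg_of_prod (u den N : R -> R) (d : R) : 0 < d ->
  (\forall h \near 0^', d <= `|den h| /\ u h * den h = N h) ->
  N @ 0^' --> 0 -> u @ 0^' --> 0.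
Proof.
move=> d0 H HN; apply/cvgrPdist_lt => e e0.
move/cvgrPdist_lt : HN => /(_ (e * d) (mulr_gt0 e0 d0)) HN'.
near=> h.
have [h1 h2] : d <= `|den h| /\ u h * den h = N h by near: h.
have h3 : `|0 - N h| < e * d.
  by near: h.
rewrite sub0r normrN in h3; rewrite sub0r normrN.
rewrite -(ltr_pM2r d0); apply: le_lt_trans h3.
rewrite -h2 normrM; apply: ler_wpM2l => //.
Unshelve. all: by end_near.
Qed.

Lemma cube_ge0 (y : R) : 0 <= y ^+ 3 -> 0 <= y.
Proof.
move=> H; rewrite leNgt; apply/negP => hy.
have h2 : 0 < y * y by nra.
have : y ^+ 3 = y * (y * y) by ring.
nra.
Qed.

Lemma sq3 (x y z : R) : (x + y + z) ^+ 2 <= 3 * (x ^+ 2 + y ^+ 2 + z ^+ 2).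
Proof.
have := sqr_ge0 (x - y); have := sqr_ge0 (y - z); have := sqr_ge0 (x - z).
move=> h1 h2 h3.
have -> : 3 * (x ^+ 2 + y ^+ 2 + z ^+ 2) = (x + y + z) ^+ 2 + ((x - y) ^+ 2 + (y - z) ^+ 2 + (x - z) ^+ 2)
  by ring.
lra.
Qed.

Lemma bbp (A B : R -> R) (c T t M1 M2 : R) :
  0 <= M1 -> 0 <= M2 -> 0 < c -> 0 < t -> 0 < A t -> A t <= 1 -> t + A t < T ->
  (forall s, - c < s < T -> derivable A s 1 /\ `|'D_1 A s| <= M1) ->
  (forall s, - c < s < T -> derivable B s 1 /\ derivable ('D_1 B) s 1 /\
                            `|'D_1 ('D_1 B) s| <= M2) ->
  (forall s, 0 <= s < T -> 0 <= 4 * A s ^+ 3 - 27 * B s ^+ 2) ->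
  `|B t * 'D_1 B t| <= Kc M1 M2 * A t ^+ 2.
Proof.
move=> M10 M20 c0 t0 h0 h1 tT HA HB HD.
set h := A t in h0 h1 tT *.
have dom : forall z, t <= z <= t + h -> - c < z < T.
  move=> z /andP[z1 z2]; apply/andP; split; lra.
have tay := @taylor2 R B t h M2 (ltW h0) (fun z hz => HB z (dom z hz)).
have lipA : `|A (t + h) - A t| <= M1 * (t + h - t).
  apply: lipD; first lra.
  by move=> z hz; apply: HA; apply: dom.
have e1 : t + h - t = h by ring.
rewrite e1 in lipA.
have D1 := HD (t + h) (ltac:(apply/andP; split; lra)).
have D0 := HD t (ltac:(apply/andP; split; lra)).
have Ap : 0 <= A (t + h) by apply: cube_ge0; have := sqr_ge0 (B (t + h)); lra.
have Au : A (t + h) <= (1 + M1) * h.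
  have := ler_normlW lipA; rewrite -/h; lra.
have Au3 : A (t + h) ^+ 3 <= ((1 + M1) * h) ^+ 3.
  by apply: lerXn2r => //; rewrite nnegrE //; apply: mulr_ge0; lra.
have hB1 : B (t + h) ^+ 2 <= (1 + M1) ^+ 3 * h ^+ 3.
  rewrite -exprMn; have := exprn_ge0 3 Ap; lra.
have h3 : 0 <= h ^+ 3 by apply: exprn_ge0; lra.
have hB0 : B t ^+ 2 <= h ^+ 3 by move: D0; rewrite -/h; lra.
set Rm := B (t + h) - B t - 'D_1 B t * h in tay.
have hR : Rm ^+ 2 <= M2 ^+ 2 * h ^+ 3.
  move/ler_normlP: tay => [t1 t2].
  have h2p : 0 <= h ^+ 2 by apply: exprn_ge0; lra.
  have : Rm ^+ 2 <= (M2 * h ^+ 2) ^+ 2.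
    have := mulr_ge0 (_ : 0 <= M2 * h ^+ 2 - Rm) (_ : 0 <= M2 * h ^+ 2 + Rm).
    rewrite !expr2; nra.
  have -> : (M2 * h ^+ 2) ^+ 2 = M2 ^+ 2 * h ^+ 3 * h by ring.
  have : M2 ^+ 2 * h ^+ 3 * h <= M2 ^+ 2 * h ^+ 3.
    rewrite -[X in _ <= X]mulr1; apply: ler_wpM2l => //.
    by apply: mulr_ge0 => //; apply: exprn_ge0.
  lra.
set Bp := 'D_1 B t in Rm tay hR *.
have eq1 : Bp * h = B (t + h) + (- B t) + (- Rm) by rewrite /Rm; ring.
have hBp : (Bp * h) ^+ 2 <= (Kc M1 M2 - 1) * h ^+ 3.
  rewrite eq1; apply: le_trans (sq3 _ _ _) _.
  rewrite !sqrrN /Kc.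
  have -> : 1 + 3 * ((1 + M1) ^+ 3 + 1 + M2 ^+ 2) - 1 = 3 * ((1 + M1) ^+ 3 + 1 + M2 ^+ 2) by ring.
  lra.
have h2 : 0 < h ^+ 2 by apply: exprn_gt0.
have hBp2 : Bp ^+ 2 <= (Kc M1 M2 - 1) * h.
  rewrite -(ler_pM2r h2).
  have -> : (Kc M1 M2 - 1) * h * h ^+ 2 = (Kc M1 M2 - 1) * h ^+ 3 by ring.
  by rewrite -exprMn.
have K1 : 1 <= Kc M1 M2.
  rewrite /Kc lerDl; apply: mulr_ge0 => //.
  have := exprn_ge0 3 (_ : 0 <= 1 + M1); have := sqr_ge0 M2; lra.
have hprod : (B t * Bp) ^+ 2 <= (Kc M1 M2 - 1) * h ^+ 4.
  rewrite exprMn.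
  have -> : (Kc M1 M2 - 1) * h ^+ 4 = h ^+ 3 * ((Kc M1 M2 - 1) * h) by ring.
  apply: ler_pM => //; apply: sqr_ge0.
have hK : (Kc M1 M2 - 1) * h ^+ 4 <= (Kc M1 M2 * h ^+ 2) ^+ 2.
  have -> : (Kc M1 M2 * h ^+ 2) ^+ 2 = Kc M1 M2 ^+ 2 * h ^+ 4 by ring.
  apply: ler_wpM2r; first by apply: exprn_ge0; lra.
  rewrite expr2; nra.
rewrite -ler_sqr ?nnegrE //; last by apply: mulr_ge0; [lra | apply: ltW].
rewrite -normrX ger0_norm ?sqr_ge0 //; lra.
Qed.

Definition Ca (a x : R) := - (2 + 2 * a) * x ^+ 2 + (6 + 4 * a + 6 * a ^+ 2) * x - 12 * a ^+ 2.

Lemma dE_gen (a b a' b' x M1 K CA CP : R) : 0 <= M1 -> 0 <= K ->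
  `|a'| <= M1 -> `|b * b'| <= K * a ^+ 2 -> `|Ca a x| <= CA -> `|54 - 18 * x| <= CP ->
  `|dEpol a b a' b' x| <= M1 * CA + K * a ^+ 2 * CP.
Proof.
move=> M0 K0 h1 h2 h3 h4.
have -> : dEpol a b a' b' x = a' * Ca a x + (b * b') * (54 - 18 * x) by rewrite /dEpol /Ca; ring.
apply: le_trans (ler_normD _ _) _; rewrite (normrM a' (Ca a x)) (normrM (b * b') (54 - 18 * x)).
apply: lerD; apply: ler_pM => //.
Qed.

Lemma Ca1 (a x : R) : 0 < a -> a <= 1/100 -> 0 <= x -> x <= 4 * a ^+ 2 -> `|Ca a x| <= 28 * a ^+ 2.
Proof.
move=> a0 a1 x0 x1; rewrite /Ca ler_norml.
have ha : a ^+ 2 <= a / 100 by rewrite expr2; nra.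
have hx2 : x ^+ 2 <= a ^+ 2.
  rewrite expr2 [a ^+ 2]expr2. nra.
have hc : 0 <= (6 + 4 * a + 6 * a ^+ 2) by have := sqr_ge0 a; lra.
have hc2 : (6 + 4 * a + 6 * a ^+ 2) * x <= 7 * x.
  apply: ler_wpM2r => //; lra.
have hx3 : 0 <= x ^+ 2 by apply: sqr_ge0.
have hc3 : (2 + 2 * a) * x ^+ 2 <= 3 * x ^+ 2 by apply: ler_wpM2r => //; lra.
have hc4 : 0 <= (6 + 4 * a + 6 * a ^+ 2) * x by apply: mulr_ge0.
have hc5 : 0 <= (2 + 2 * a) * x ^+ 2 by apply: mulr_ge0 => //; lra.
apply/andP; split; lra.
Qed.

Lemma Ca2 (a x : R) : 0 < a -> a <= 1/100 -> a / 2 <= x -> x <= 3 * a -> `|Ca a x| <= 21 * a.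
Proof.
move=> a0 a1 x0 x1; rewrite /Ca ler_norml.
have ha : a ^+ 2 <= a / 100 by rewrite expr2; nra.
have hx2 : x ^+ 2 <= 9 * a ^+ 2 by rewrite !expr2; nra.
have hc : 0 <= (6 + 4 * a + 6 * a ^+ 2) by have := sqr_ge0 a; lra.
have hc2 : (6 + 4 * a + 6 * a ^+ 2) * x <= 7 * x by apply: ler_wpM2r; lra.
have hx3 : 0 <= x ^+ 2 by apply: sqr_ge0.
have hc3 : (2 + 2 * a) * x ^+ 2 <= 3 * x ^+ 2 by apply: ler_wpM2r => //; lra.
have hc4 : 0 <= (6 + 4 * a + 6 * a ^+ 2) * x by apply: mulr_ge0; lra.
have hc5 : 0 <= (2 + 2 * a) * x ^+ 2 by apply: mulr_ge0 => //; lra.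
apply/andP; split; lra.
Qed.

Lemma Ca3 (a x : R) : 0 < a -> a <= 1/100 -> 2 <= x -> x <= 4 -> `|Ca a x| <= 60.
Proof.
move=> a0 a1 x0 x1; rewrite /Ca ler_norml.
have ha : a ^+ 2 <= a / 100 by rewrite expr2; nra.
have hx2 : x ^+ 2 <= 16 by rewrite !expr2; nra.
have hc : 0 <= (6 + 4 * a + 6 * a ^+ 2) by have := sqr_ge0 a; lra.
have hc2 : (6 + 4 * a + 6 * a ^+ 2) * x <= 7 * x by apply: ler_wpM2r; lra.
have hx3 : 0 <= x ^+ 2 by apply: sqr_ge0.
have hc3 : (2 + 2 * a) * x ^+ 2 <= 3 * x ^+ 2 by apply: ler_wpM2r => //; lra.
have hc4 : 0 <= (6 + 4 * a + 6 * a ^+ 2) * x by apply: mulr_ge0; lra.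
have hc5 : 0 <= (2 + 2 * a) * x ^+ 2 by apply: mulr_ge0 => //; lra.
apply/andP; split; lra.
Qed.

End Bnd.


Section Root.
Variable R : realType.

Lemma den_bounds (a0 as_ l1t l2t l3t l1s l2s l3s : R) :
  0 < a0 -> a0 <= 1/100 -> a0 / 2 <= as_ -> as_ <= 2 * a0 -> as_ <= 1/100 ->
  0 <= l1t -> l1t <= 4 * a0 ^+ 2 -> a0 / 2 < l2t -> l2t < 3 * a0 -> 2 < l3t -> l3t < 4 ->
  0 <= l1s -> l1s <= 4 * as_ ^+ 2 -> as_ / 2 < l2s -> l2s < 3 * as_ -> 2 < l3s -> l3s < 4 ->
  [/\ a0 / 8 <= `|(l1t - l2s) * (l1t - l3s)|, a0 / 8 <= `|(l2t - l1s) * (l2t - l3s)|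
    & 1 <= `|(l3t - l1s) * (l3t - l2s)|].
Proof.
move=> a0p a01 as1 as2 as3 p1 p2 p3 p4 p5 p6 q1 q2 q3 q4 q5 q6.
have ha : a0 ^+ 2 <= a0 / 100 by rewrite expr2; nra.
have hs : as_ ^+ 2 <= as_ / 100 by rewrite expr2; nra.
split.
- rewrite normrM -(mulr1 (a0 / 8)); apply: ler_pM; try lra.
    rewrite ler0_norm; lra.
  rewrite ler0_norm; lra.
- rewrite normrM -(mulr1 (a0 / 8)); apply: ler_pM; try lra.
    rewrite ger0_norm; lra.
  rewrite ler0_norm; lra.
- rewrite normrM -(mulr1 1); apply: ler_pM; try lra.
    rewrite ger0_norm; lra.
  rewrite ger0_norm; lra.
Qed.

Lemma root_cont (A B Li : R -> R) (den : R -> R) (t d : R) :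
  derivable A t 1 -> derivable B t 1 -> 0 < d ->
  (\forall h \near 0^', d <= `|den h| /\
     (Li t - Li (h + t)) * den h =
     Epol (A (h + t)) (B (h + t)) (Li t) - Epol (A t) (B t) (Li t)) ->
  (fun h => Li (h + t)) @ 0^' --> Li t.
Proof.
move=> dA dB d0 H.
have HN : (fun h => Epol (A (h + t)) (B (h + t)) (Li t) - Epol (A t) (B t) (Li t)) @ 0^' --> 0.
  have HE := @Epol_cvg R A B t (Li t) (cont_from_deriv dA) (cont_from_deriv dB).
  rewrite -[X in _ --> X](subrr (Epol (A t) (B t) (Li t))).
  exact: (cvgB HE (cvg_cst _)).
have := cvg_of_prod d0 H HN.
move=> Hu.
have -> : (fun h => Li (h + t)) = (fun h => Li t - (Li t - Li (h + t))).
  by apply/funext => h; rewrite opprB addrCA subrr addr0.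
rewrite -[X in _ --> X]subr0.
by apply: cvgB => //; exact: cvg_cst.
Qed.

Lemma root_deriv (A B Li Lj Lk : R -> R) (t d : R) :
  derivable A t 1 -> derivable B t 1 -> 0 < d ->
  (fun h => Lj (h + t)) @ 0^' --> Lj t -> (fun h => Lk (h + t)) @ 0^' --> Lk t ->
  (\forall h \near 0^', d <= `|(Li t - Lj (h + t)) * (Li t - Lk (h + t))| /\
     (Li t - Li (h + t)) * ((Li t - Lj (h + t)) * (Li t - Lk (h + t))) =
     Epol (A (h + t)) (B (h + t)) (Li t) - Epol (A t) (B t) (Li t)) ->
  (Li t - Lj t) * (Li t - Lk t) != 0 ->
  derivable Li t 1 /\
  'D_1 Li t * ((Li t - Lj t) * (Li t - Lk t)) =
     - dEpol (A t) (B t) ('D_1 A t) ('D_1 B t) (Li t).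
Proof.
move=> dA dB d0 cj ck H nz.
set D0 := (Li t - Lj t) * (Li t - Lk t) in nz *.
have Hq := @Epol_quot R A B t (Li t) ('D_1 A t) ('D_1 B t) (cont_from_deriv dA)
  (cont_from_deriv dB) (derive_to_quot dA) (derive_to_quot dB).
have Hden : (fun h => (Li t - Lj (h + t)) * (Li t - Lk (h + t))) @ 0^' --> D0.
  by apply: cvgM; apply: cvgB => //; exact: cvg_cst.
have HL : (fun h => - (h^-1 * (Epol (A (h + t)) (B (h + t)) (Li t) - Epol (A t) (B t) (Li t)))
   * ((Li t - Lj (h + t)) * (Li t - Lk (h + t)))^-1) @ 0^'
   --> - dEpol (A t) (B t) ('D_1 A t) ('D_1 B t) (Li t) * D0^-1.
  apply: cvgM; [exact: cvgN | exact: cvgV].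
have HQ : (fun h => h^-1 * (Li (h + t) - Li t)) @ 0^' -->
    - dEpol (A t) (B t) ('D_1 A t) ('D_1 B t) (Li t) * D0^-1.
  apply: cvg_trans HL; apply: near_eq_cvg; near=> h.
  have hn : h != 0 by near: h; exact: nbhs_dnbhs_neq.
  have [h1 h2] : d <= `|(Li t - Lj (h + t)) * (Li t - Lk (h + t))| /\
     (Li t - Li (h + t)) * ((Li t - Lj (h + t)) * (Li t - Lk (h + t))) =
     Epol (A (h + t)) (B (h + t)) (Li t) - Epol (A t) (B t) (Li t) by near: h.
  have dn : (Li t - Lj (h + t)) * (Li t - Lk (h + t)) != 0.
    by rewrite -normr_gt0; apply: lt_le_trans h1.
  rewrite /= -h2; field.
  by move: dn; rewrite mulf_eq0 negb_or => /andP[-> ->]; rewrite hn.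
have [dL eL] := quot_to_derive HQ.
by split => //; rewrite eL mulfVK.
Unshelve. all: by end_near.
Qed.

End Root.


Definition Cst (R : realType) (M1 M2 : R) : R := 8 * (100 * M1 + 100 * Kc M1 M2 + 1).

Section Core.
Variable R : realType.

Lemma final_bound (D den dE bound d : R) : 0 < d -> d <= `|den| -> D * den = - dE ->
  `|dE| <= bound * d -> `|D| <= bound.
Proof.
move=> d0 h1 h2 h3.
rewrite -(ler_pM2r d0); apply: le_trans h3.
have -> : `|dE| = `|D| * `|den| by rewrite -normrM h2 normrN.
by apply: ler_wpM2l.
Qed.

Lemma Kc_ge1 (M1 M2 : R) : 0 <= M1 -> 1 <= Kc M1 M2.
Proof.
move=> M10; rewrite /Kc lerDl; apply: mulr_ge0 => //.
have := exprn_ge0 3 (_ : 0 <= 1 + M1); have := sqr_ge0 M2; lra.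
Qed.

Lemma core (A B L1 L2 L3 : R -> R) (c T r eps M1 M2 : R) :
  0 < c -> 0 < r -> r <= T / 2 -> eps <= 1/100 -> eps <= T / 4 -> 0 <= M1 -> 0 <= M2 ->
  (forall s, - c < s < T -> derivable A s 1 /\ `|'D_1 A s| <= M1) ->
  (forall s, - c < s < T -> derivable B s 1 /\ derivable ('D_1 B) s 1 /\
                            `|'D_1 ('D_1 B) s| <= M2) ->
  (forall s, 0 <= s < T -> 0 <= 4 * A s ^+ 3 - 27 * B s ^+ 2) ->
  (forall s, 0 < s < r -> 0 < A s /\ A s <= eps) ->
  (forall s, 0 < s < r -> L1 s <= L2 s /\ L2 s <= L3 s /\
       forall x, (x - L1 s) * (x - L2 s) * (x - L3 s) = Epol (A s) (B s) x) ->
  forall t, 0 < t < r ->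
    [/\ derivable L1 t 1, derivable L2 t 1 & derivable L3 t 1] /\
    [/\ `|'D_1 L1 t| <= Cst M1 M2 * A t, `|'D_1 L2 t| <= Cst M1 M2
      & `|'D_1 L3 t| <= Cst M1 M2].
Proof.
move=> c0 r0 rT e1 e2 M10 M20 HA HB HD Hpos Heig t tr.
have tT : - c < t < T by move: tr => /andP[t1 t2]; apply/andP; split; lra.
have [dA bA] := HA t tT.
have [dB _] := HB t tT.
have loc_s : forall s, 0 < s < r -> [/\ 0 <= L1 s, L1 s <= 4 * A s ^+ 2, A s / 2 < L2 s,
    L2 s < 3 * A s & 2 < L3 s /\ L3 s < 4].
  move=> s hs; have [p1 p2] := Hpos s hs; have [q1 [q2 q3]] := Heig s hs.
  apply: loc => //; first lra.
  by apply: HD; move: hs => /andP[s1 s2]; apply/andP; split; lra.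
have [a0p a0e] := Hpos t tr.
set a0 := A t in a0p a0e *.
have [t1 t2 t3 t4 [t5 t6]] := loc_s t tr.
have Hnear : \forall h \near 0^', (0 < h + t < r) /\ (a0 / 2 <= A (h + t) <= 2 * a0).
  have cid : (fun h : R => h + t) @ 0^' --> t.
    rewrite -[X in _ --> X]add0r; apply: cvgD; [exact: cvg_within | exact: cvg_cst].
  move/cvgrPdist_lt : cid => /(_ (Num.min t (r - t))).
  have mpos : 0 < Num.min t (r - t).
    by rewrite lt_min; move: tr => /andP[h1 h2]; apply/andP; split; lra.
  move=> /(_ mpos) N1.
  move/cvgrPdist_lt : (cont_from_deriv dA) => /(_ (a0 / 2)).
  have a2 : 0 < a0 / 2 by lra.
  move=> /(_ a2) N2.
  near=> h.
  have h1 : `|t - (h + t)| < Num.min t (r - t) by near: h.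
  have h2 : `|A t - A (h + t)| < a0 / 2 by near: h.
  move: h1; rewrite lt_min => /andP[h1 h1'].
  move/ltr_normlP : h1 => [h1a h1b].
  move/ltr_normlP : h1' => [h1c h1d].
  move/ltr_normlP : h2 => [h2a h2b].
  rewrite -/a0 in h2a h2b.
  move: tr => /andP[tr1 tr2].
  split; apply/andP; split; lra.
rewrite -/a0 in t1 t2 t3 t4.
have E0 : forall x, (x - L1 t) * (x - L2 t) * (x - L3 t) = Epol a0 (B t) x.
  exact: (Heig t tr).2.2.
have Hall : \forall h \near 0^',
  [/\ a0 / 8 <= `|(L1 t - L2 (h + t)) * (L1 t - L3 (h + t))| /\
      (L1 t - L1 (h + t)) * ((L1 t - L2 (h + t)) * (L1 t - L3 (h + t))) =
      Epol (A (h + t)) (B (h + t)) (L1 t) - Epol (A t) (B t) (L1 t),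
      a0 / 8 <= `|(L2 t - L1 (h + t)) * (L2 t - L3 (h + t))| /\
      (L2 t - L2 (h + t)) * ((L2 t - L1 (h + t)) * (L2 t - L3 (h + t))) =
      Epol (A (h + t)) (B (h + t)) (L2 t) - Epol (A t) (B t) (L2 t) &
      a0 / 8 <= `|(L3 t - L1 (h + t)) * (L3 t - L2 (h + t))| /\
      (L3 t - L3 (h + t)) * ((L3 t - L1 (h + t)) * (L3 t - L2 (h + t))) =
      Epol (A (h + t)) (B (h + t)) (L3 t) - Epol (A t) (B t) (L3 t)].
  near=> h.
  have [hs ha] : (0 < h + t < r) /\ (a0 / 2 <= A (h + t) <= 2 * a0) by near: h.
  have [s1 s2 s3 s4 [s5 s6]] := loc_s _ hs.
  have [as1 as2] := Hpos _ hs.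
  move/andP: ha => [ha1 ha2].
  have Es := (Heig _ hs).2.2.
  have [d1 d2 d3] := den_bounds a0p (le_trans a0e e1) ha1 ha2 (le_trans as2 e1)
     t1 t2 t3 t4 t5 t6 s1 s2 s3 s4 s5 s6.
  have d3' : a0 / 8 <= `|(L3 t - L1 (h + t)) * (L3 t - L2 (h + t))|.
    apply: le_trans d3; lra.
  rewrite -!Es -/a0 -!E0 !subrr.
  split; (split; [by [] | ring]).
have a8 : 0 < a0 / 8 by lra.
have P1 : \forall h \near 0^', a0 / 8 <= `|(L1 t - L2 (h + t)) * (L1 t - L3 (h + t))| /\
      (L1 t - L1 (h + t)) * ((L1 t - L2 (h + t)) * (L1 t - L3 (h + t))) =
      Epol (A (h + t)) (B (h + t)) (L1 t) - Epol (A t) (B t) (L1 t).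
  by apply: filterS Hall => h [].
have P2 : \forall h \near 0^', a0 / 8 <= `|(L2 t - L1 (h + t)) * (L2 t - L3 (h + t))| /\
      (L2 t - L2 (h + t)) * ((L2 t - L1 (h + t)) * (L2 t - L3 (h + t))) =
      Epol (A (h + t)) (B (h + t)) (L2 t) - Epol (A t) (B t) (L2 t).
  by apply: filterS Hall => h [].
have P3 : \forall h \near 0^', a0 / 8 <= `|(L3 t - L1 (h + t)) * (L3 t - L2 (h + t))| /\
      (L3 t - L3 (h + t)) * ((L3 t - L1 (h + t)) * (L3 t - L2 (h + t))) =
      Epol (A (h + t)) (B (h + t)) (L3 t) - Epol (A t) (B t) (L3 t).
  by apply: filterS Hall => h [].
have cL1 := root_cont dA dB a8 P1.
have cL2 := root_cont dA dB a8 P2.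
have cL3 := root_cont dA dB a8 P3.
have g1 : a0 / 2 <= a0 by lra.
have g2 : a0 <= 2 * a0 by lra.
have [d1 d2 d3] := den_bounds a0p (le_trans a0e e1) g1 g2 (le_trans a0e e1) t1 t2 t3 t4 t5 t6 t1 t2 t3 t4 t5 t6.
have nz1 : (L1 t - L2 t) * (L1 t - L3 t) != 0 by rewrite -normr_gt0; lra.
have nz2 : (L2 t - L1 t) * (L2 t - L3 t) != 0 by rewrite -normr_gt0; lra.
have nz3 : (L3 t - L1 t) * (L3 t - L2 t) != 0 by rewrite -normr_gt0; lra.
have [dL1 eL1] := root_deriv dA dB a8 cL2 cL3 P1 nz1.
have [dL2 eL2] := root_deriv dA dB a8 cL1 cL3 P2 nz2.
have [dL3 eL3] := root_deriv dA dB a8 cL1 cL2 P3 nz3.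
split; first by [].
have tah : t + a0 < T by move: tr => /andP[h1 h2]; lra.
have a01 : a0 <= 1 by lra.
have t0 : 0 < t by move: tr => /andP[].
have bb := @bbp R A B c T t M1 M2 M10 M20 c0 t0 a0p a01 tah HA HB HD.
set K := Kc M1 M2 in bb.
clear Hall P1 P2 P3 Hnear loc_s HA HB HD Heig Hpos cL1 cL2 cL3 dL1 dL2 dL3 E0 dA dB.
have K0 : 0 <= K by have := Kc_ge1 M2 M10; rewrite -/K; lra.
have ha : a0 ^+ 2 <= a0 / 100 by rewrite expr2; nra.
have a2p : 0 <= a0 ^+ 2 by apply: sqr_ge0.
have m1 : 0 <= M1 * a0 ^+ 2 by apply: mulr_ge0.
have m2 : 0 <= K * a0 ^+ 2 by apply: mulr_ge0.
have m3 : K * a0 ^+ 2 <= K * a0 by apply: ler_wpM2l => //; lra.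
have m4 : K * a0 ^+ 2 <= K by rewrite -[X in _ <= X]mulr1; apply: ler_wpM2l => //; lra.
have m5 : 0 <= M1 * a0 by apply: mulr_ge0 => //; lra.
have m6 : 0 <= K * a0 by apply: mulr_ge0 => //; lra.
split.
- apply: (final_bound a8 d1 eL1).
  have CP : `|54 - 18 * L1 t| <= 54 by rewrite ler_norml; apply/andP; split; lra.
  apply: le_trans (dE_gen M10 K0 bA bb (Ca1 a0p (le_trans a0e e1) t1 t2) CP) _.
  have -> : Cst M1 M2 * a0 * (a0 / 8) = 100 * (M1 * a0 ^+ 2) + 100 * (K * a0 ^+ 2) + a0 ^+ 2.
    by rewrite /Cst -/K; field.
  have -> : M1 * (28 * a0 ^+ 2) + K * a0 ^+ 2 * 54 = 28 * (M1 * a0 ^+ 2) + 54 * (K * a0 ^+ 2)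
    by ring.
  lra.
- apply: (final_bound a8 d2 eL2).
  have CP : `|54 - 18 * L2 t| <= 54 by rewrite ler_norml; apply/andP; split; lra.
  have l2a : a0 / 2 <= L2 t by lra.
  have l2b : L2 t <= 3 * a0 by lra.
  apply: le_trans (dE_gen M10 K0 bA bb (Ca2 a0p (le_trans a0e e1) l2a l2b) CP) _.
  have -> : Cst M1 M2 * (a0 / 8) = 100 * (M1 * a0) + 100 * (K * a0) + a0.
    by rewrite /Cst -/K; field.
  have -> : M1 * (21 * a0) + K * a0 ^+ 2 * 54 = 21 * (M1 * a0) + 54 * (K * a0 ^+ 2) by ring.
  lra.
- apply: (final_bound ltr01 d3 eL3).
  have CP : `|54 - 18 * L3 t| <= 18 by rewrite ler_norml; apply/andP; split; lra.
  have l3a : 2 <= L3 t by lra.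
  have l3b : L3 t <= 4 by lra.
  apply: le_trans (dE_gen M10 K0 bA bb (Ca3 a0p (le_trans a0e e1) l3a l3b) CP) _.
  rewrite mulr1 /Cst -/K.
  have -> : M1 * 60 + K * a0 ^+ 2 * 18 = 60 * M1 + 18 * (K * a0 ^+ 2) by ring.
  lra.
Unshelve. all: by end_near.
Qed.

End Core.


Lemma eig_poly (R : realType) (a b l1 l2 l3 : R) :
  sorted_eigenvalues (Smat a b) l1 l2 l3 ->
  l1 <= l2 /\ l2 <= l3 /\ forall x, (x - l1) * (x - l2) * (x - l3) = Epol a b x.
Proof.
move=> [/andP[h1 h2] E]; split => //; split => // x.
by rewrite -char_Smat E !hornerE.
Qed.


Unset Implicit Arguments. Set Strict Implicit.

Theorem lemma2p3 (R : realType) (l : nat) (W : set 'rV[R]_l) (Xbar : 'rV[R]_l)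
  (c T : R) (a b : R -> 'rV[R]_l -> R)
  (l1 l2 l3 : R -> 'rV[R]_l -> R) :
  open W -> W Xbar -> 0 < c -> 0 < T ->
  smooth_bdd_derivs c T W a -> smooth_bdd_derivs c T W b ->
  (forall t X, 0 <= t < T -> W X -> 0 <= 4 * a t X ^+ 3 - 27 * b t X ^+ 2) ->
  a 0 Xbar = 0 ->
  (forall t X, 0 < t < T -> W X -> 0 < a t X) ->
  (forall t X, 0 < t < T -> W X ->
     sorted_eigenvalues (Smat (a t X) (b t X)) (l1 t X) (l2 t X) (l3 t X)) ->
  exists r : R, 0 < r /\ exists C : R, 0 < C /\
    forall t X, 0 < t < r -> ball Xbar r X ->
      [/\ derivable (fun s => l1 s X) t 1,
          derivable (fun s => l2 s X) t 1
        & derivable (fun s => l3 s X) t 1] /\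
      [/\ `|'D_1 (fun s => l1 s X) t| <= C * a t X,
          `|'D_1 (fun s => l2 s X) t| <= C
        & `|'D_1 (fun s => l3 s X) t| <= C].
Proof.
move=> oW WX c0 T0 [Sa1 Sa2] [Sb1 Sb2] Hdisc ha0 Hapos Heig.
have [r0 r0p Hr0] : exists2 e : R, 0 < e & ball Xbar e `<=` W.
  have : nbhs Xbar W by apply: open_nbhs_nbhs; split.
  by move/nbhs_ballP.
have dom0 : - c < 0 < T by apply/andP; split; lra.
have [M1 HM1] : exists M1 : R, forall t X, - c < t < T -> W X ->
    `|'D_1 (fun s => a s X) t| <= M1.
  by have [M HM] := Sa2 [:: None] isT; exists M.
have [M2 HM2] : exists M2 : R, forall t X, - c < t < T -> W X ->
    `|'D_1 (fun s => 'D_1 (fun s' => b s' X) s) t| <= M2.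
  by have [M HM] := Sb2 [:: None; None] isT; exists M.
have HMj : forall j : 'I_l, exists M : R, forall t X, - c < t < T -> W X ->
    `|'D_(delta_mx 0 j) (a t) X| <= M.
  by move=> j; have [M HM] := Sa2 [:: Some j] isT; exists M.
have [Mf HMf] := choice HMj.
have M10 : 0 <= M1 by apply: le_trans (HM1 0 Xbar dom0 WX).
have M20 : 0 <= M2 by apply: le_trans (HM2 0 Xbar dom0 WX).
set MX := \sum_(j < l) `|Mf j|.
have MX0 : 0 <= MX by apply: sumr_ge0 => j _.
have HMX : forall j, Mf j <= MX.
  move=> j; apply: le_trans (ler_norm _) _.
  by rewrite /MX (bigD1 j) //= lerDl; apply: sumr_ge0 => i _.
set eps : R := Num.min (1/100 : R) (T / 4).
have eps0 : 0 < eps by rewrite /eps lt_min; apply/andP; split; lra.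
have e1 : eps <= 1/100 by rewrite /eps ge_min lexx.
have e2 : eps <= T / 4 by rewrite /eps ge_min lexx orbT.
set KK : R := l%:R * MX + M1 + 1.
have KK0 : 0 < KK by rewrite /KK; have := mulr_ge0 (ler0n R l) MX0; lra.
set r : R := Num.min (r0 / 2) (Num.min (T / 2) (eps / KK)).
have rp : 0 < r.
  rewrite /r !lt_min; apply/and3P; split; try lra.
  exact: divr_gt0.
have rr0 : r <= r0 / 2 by rewrite /r ge_min lexx.
have rT : r <= T / 2 by rewrite /r !ge_min lexx orbT.
have reps : r <= eps / KK by rewrite /r !ge_min lexx !orbT.
have inW : forall Z : 'rV[R]_l, (forall i, `|Z 0 i - Xbar 0 i| <= r) -> W Z.
  move=> Z HZ; apply: Hr0; apply: rV_ball => // i.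
  by apply: le_lt_trans (HZ i) _; lra.
have ballW : forall X, ball Xbar r X -> W X.
  move=> X bX; apply: inW => i; apply: ltW; exact: ball_rV bX i.
have Hsmall : forall X, ball Xbar r X -> forall s, 0 < s < r -> 0 < a s X /\ a s X <= eps.
  move=> X bX s /andP[s1 s2].
  have WX' := ballW X bX.
  split; first by apply: Hapos => //; apply/andP; split; lra.
  have P0 : `|a 0 X - a 0 Xbar| <= l%:R * (MX * r).
    apply: path_bound => //; first lra.
      by move=> i; apply: ltW; exact: ball_rV bX i.
    move=> j Z HZ; have WZ := inW Z HZ; split.
      exact: (Sa1 [::] (Some j) 0 Z dom0 WZ).
    exact: le_trans (HMf j 0 Z dom0 WZ) (HMX j).
  have P1 : `|a s X - a 0 X| <= M1 * (s - 0).
    apply: (@lipD R (fun s => a s X)); first lra.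
    move=> z /andP[z1 z2]; have dz : - c < z < T by apply/andP; split; lra.
    split; [exact: (Sa1 [::] None z X dz WX') | exact: HM1].
  rewrite ha0 subr0 in P0.
  have h1 := ler_normlW P1.
  have h2 := ler_normlW P0.
  have h3 : KK * r <= eps.
    by have := ler_wpM2l (ltW KK0) reps; rewrite mulrCA mulfV ?gt_eqF // mulr1.
  have h4 : l%:R * (MX * r) = (l%:R * MX) * r by ring.
  have h5 : M1 * s <= M1 * r by apply: ler_wpM2l => //; lra.
  have h6 : KK * r = l%:R * MX * r + M1 * r + r by rewrite /KK; ring.
  lra.
exists r; split => //; exists (Cst M1 M2); split.
  rewrite /Cst; apply: mulr_gt0 => //.
  have := Kc_ge1 M2 M10; lra.
move=> t X tr bX.
have WX' := ballW X bX.
apply: (@core R (fun s => a s X) (fun s => b s X) (fun s => l1 s X) (fun s => l2 s X)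
  (fun s => l3 s X) c T r eps M1 M2) => //.
- move=> s hs; split; [exact: (Sa1 [::] None s X hs WX') | exact: HM1].
- move=> s hs; split; first exact: (Sb1 [::] None s X hs WX').
  split; [exact: (Sb1 [:: None] None s X hs WX') | exact: HM2].
- by move=> s hs; apply: Hdisc.
- exact: Hsmall.
- move=> s /andP[s1 s2]; apply: eig_poly; apply: Heig => //.
  by apply/andP; split; lra.
Qed.
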